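(* Let $B$ and $H$ be bialgebras over a field $\mathbb{k}$ and $\langle-,-\rangle\colon B\otimes H\to\mathbb{k}$ a Hopf (bialgebra) pairing. (i) Let $I\subset B$ be a coideal and $K_H$ a set of algebra generators of $H$. If $\langle i,h\rangle=0$ for all $i\in I$ and $h\in K_H$, then $\langle i,h\rangle=0$ for all $i\in I$ and $h\in H$. (ii) Let $I\subset B$ be a biideal, $K_I\subset I$ a set of generators of $I$ as an ideal, and $K_H$ a set of generators of $H$ as an algebra. If $\langle i,h\rangle=0$ for all $i\in K_I$ and $h\in K_H$, and moreover $\Delta^2(h)\in H\otimes\mathrm{Span}_{\mathbb{k}}(K_H\cup\{1\})\otimes H$ for all $h\in K_H$, then $\langle i,h\rangle=0$ for all $i\in I$ and $h\in H$.
   Context: A Hopf (bialgebra) pairing $\langle-,-\rangle\colon B\otimes H\to\mathbb{k}$ is a bilinear form (not necessarily nondegenerate) with $\langle\Delta_B(b),h\otimes k\rangle=\langle b,hk\rangle$, $\langle b,1_H\rangle=\epsilon_B(b)$, $\langle b\otimes c,\Delta_H(h)\rangle=\langle bc,h\rangle$, $\langle 1_B,h\rangle=\epsilon_H(h)$, where pairings of tensor products are taken componentwise. A coideal $I\subset B$ is a subspace with $\Delta(I)\subset I\otimes B+B\otimes I$ and $\epsilon(I)=0$; a biideal is an ideal that is also a coideal. $\Delta^2=(\mathrm{id}\otimes\Delta)\circ\Delta\colon H\to H^{\otimes 3}$. *)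

(* Defs.v *)
(* Bialgebras over a field k, with tensors represented by
   finite lists of simple tensors; equality of tensors is tested against all
   bilinear (resp. trilinear) forms, which over a field characterises equality
   in V (x) W (resp. U (x) V (x) W). *)
From mathcomp Require Import all_boot all_order all_algebra.
Set Implicit Arguments.
Unset Strict Implicit.
Unset Printing Implicit Defensive.
Import GRing.Theory.
Local Open Scope ring_scope.

Section Tensors.
Variable k : fieldType.

Definition bilinear_form (V W : lmodType k) (phi : V -> W -> k) : Prop :=
  (forall (a : k) x x' y, phi (a *: x + x') y = a * phi x y + phi x' y) /\
  (forall (a : k) x y y', phi x (a *: y + y') = a * phi x y + phi x y').

Definition trilinear_form (U V W : lmodType k) (phi : U -> V -> W -> k) : Prop :=
  (forall (a : k) x x' y z, phi (a *: x + x') y z = a * phi x y z + phi x' y z) /\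
  (forall (a : k) x y y' z, phi x (a *: y + y') z = a * phi x y z + phi x y' z) /\
  (forall (a : k) x y z z', phi x y (a *: z + z') = a * phi x y z + phi x y z').

Definition tensor2 (V W : lmodType k) := seq (V * W).
Definition tensor3 (U V W : lmodType k) := seq (U * V * W).

Definition teq2 (V W : lmodType k) (t t' : tensor2 V W) : Prop :=
  forall phi : V -> W -> k, bilinear_form phi ->
    \sum_(p <- t) phi p.1 p.2 = \sum_(p <- t') phi p.1 p.2.

Definition teq3 (U V W : lmodType k) (t t' : tensor3 U V W) : Prop :=
  forall phi : U -> V -> W -> k, trilinear_form phi ->
    \sum_(p <- t) phi p.1.1 p.1.2 p.2 = \sum_(p <- t') phi p.1.1 p.1.2 p.2.

Definition span_of (V : lmodType k) (S : V -> Prop) (x : V) : Prop :=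
  exists l : seq (k * V), (forall p, p \in l -> S p.2) /\
                          \sum_(p <- l) p.1 *: p.2 = x.

Definition subspace (V : lmodType k) (S : V -> Prop) : Prop :=
  S 0 /\ forall (a : k) x y, S x -> S y -> S (a *: x + y).

End Tensors.

Section Bialgebra.
Variable k : fieldType.
Variable B : algType k.
Variable Delta : B -> tensor2 B B.
Variable eps : B -> k.

(* (id (x) Delta) o Delta *)
Definition Delta2 (x : B) : tensor3 B B B :=
  [seq (p.1, q.1, q.2) | p <- Delta x, q <- Delta p.2].

(* (Delta (x) id) o Delta *)
Definition Delta2' (x : B) : tensor3 B B B :=
  [seq (q.1, q.2, p.2) | p <- Delta x, q <- Delta p.1].

Definition is_bialgebra : Prop :=
  (forall (a : k) x y, teq2 (Delta (a *: x + y))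
                          ([seq (a *: p.1, p.2) | p <- Delta x] ++ Delta y)) /\
  (forall (a : k) x y, eps (a *: x + y) = a * eps x + eps y) /\
  (forall x, teq3 (Delta2' x) (Delta2 x)) /\
  (forall x, \sum_(p <- Delta x) eps p.1 *: p.2 = x) /\
  (forall x, \sum_(p <- Delta x) eps p.2 *: p.1 = x) /\
  (forall x y, teq2 (Delta (x * y))
                    [seq (p.1 * q.1, p.2 * q.2) | p <- Delta x, q <- Delta y]) /\
  teq2 (Delta 1) [:: (1, 1)] /\
  (forall x y, eps (x * y) = eps x * eps y) /\
  eps 1 = 1.

Definition is_coideal (I : B -> Prop) : Prop :=
  subspace I /\
  forall i, I i ->
    eps i = 0 /\
    exists t1 t2 : tensor2 B B,
      (forall p, p \in t1 -> I p.1) /\ (forall p, p \in t2 -> I p.2) /\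
      teq2 (Delta i) (t1 ++ t2).

Definition is_ideal (I : B -> Prop) : Prop :=
  subspace I /\ forall x i, I i -> I (x * i) /\ I (i * x).

Definition is_biideal (I : B -> Prop) : Prop := is_ideal I /\ is_coideal I.

Definition is_subalgebra (S : B -> Prop) : Prop :=
  subspace S /\ S 1 /\ forall x y, S x -> S y -> S (x * y).

Definition algebra_generators (K : B -> Prop) : Prop :=
  forall S, is_subalgebra S -> (forall x, K x -> S x) -> forall x, S x.

Definition ideal_generators (K I : B -> Prop) : Prop :=
  (forall x, K x -> I x) /\
  forall J, is_ideal J -> (forall x, K x -> J x) -> forall x, I x -> J x.

End Bialgebra.

Definition is_hopf_pairing (k : fieldType) (B H : algType k)
  (DB : B -> tensor2 B B) (eB : B -> k) (DH : H -> tensor2 H H) (eH : H -> k)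
  (pair : B -> H -> k) : Prop :=
  bilinear_form pair /\
  (forall b h h', \sum_(p <- DB b) pair p.1 h * pair p.2 h' = pair b (h * h')) /\
  (forall b, pair b 1 = eB b) /\
  (forall b c h, \sum_(p <- DH h) pair b p.1 * pair c p.2 = pair (b * c) h) /\
  (forall h, pair 1 h = eH h).

Definition in_H_span_H (k : fieldType) (H : algType k) (S : H -> Prop)
  (t : tensor3 H H H) : Prop :=
  exists t' : tensor3 H H H,
    (forall p, p \in t' -> span_of S p.1.2) /\ teq3 t t'.

(* Main.v *)
Require Import Defs.
From mathcomp Require Import all_boot all_order all_algebra.
From mathcomp Require Import ring.
Import GRing.Theory.
Local Open Scope ring_scope.
Set Implicit Arguments.
Unset Strict Implicit.

Lemma lin0 (k : fieldType) (V : lmodType k) (f : V -> k) :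
  (forall a u v, f (a *: u + v) = a * f u + f v) -> f 0 = 0.
Proof.
move=> lin; have := lin 1 0 0; rewrite scale1r addr0 mul1r => H.
by apply: (addrI (f 0)); rewrite addr0 -H.
Qed.

Lemma span0 (k : fieldType) (V : lmodType k) (f : V -> k) (S : V -> Prop) x :
  (forall a u v, f (a *: u + v) = a * f u + f v) ->
  (forall s, S s -> f s = 0) -> span_of S x -> f x = 0.
Proof.
move=> lin hS [l [hl <-]]; elim: l hl => [|p l IH] hl.
  by rewrite big_nil (lin0 lin).
rewrite big_cons lin hS ?mulr0 ?add0r; last by apply: hl; rewrite inE eqxx.
by apply: IH => q hq; apply: hl; rewrite inE hq orbT.
Qed.

Section P.
Variables (k : fieldType) (B H : algType k)
  (DB : B -> tensor2 B B) (eB : B -> k) (DH : H -> tensor2 H H) (eH : H -> k)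
  (pair : B -> H -> k).
Hypothesis hp : is_hopf_pairing DB eB DH eH pair.

Lemma pl a x x' y : pair (a *: x + x') y = a * pair x y + pair x' y.
Proof. by case: hp => [[bl br] _]; apply: bl. Qed.
Lemma pr a x y y' : pair x (a *: y + y') = a * pair x y + pair x y'.
Proof. by case: hp => [[bl br] _]; apply: br. Qed.

Lemma part1 (I : B -> Prop) (KH : H -> Prop) :
     is_coideal DB eB I -> algebra_generators KH ->
     (forall i h, I i -> KH h -> pair i h = 0) ->
     forall i h, I i -> pair i h = 0.
Proof.
case: hp => [_ [pm [p1 [pc pe]]]].
move=> [_ hI] gen hK i h Ii.
pose S := fun h => forall i, I i -> pair i h = 0.
suff : S h by apply.
apply: gen; last by move=> x Kx j Ij; apply: hK.
split; [split|split].
- by move=> j _; apply: (lin0 (fun a u v => pr a j u v)).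
- move=> a x y Sx Sy j Ij; by rewrite pr (Sx j Ij) (Sy j Ij) mulr0 add0r.
- by move=> j Ij; rewrite p1; case: (hI j Ij).
move=> x y Sx Sy j Ij; rewrite -pm.
case: (hI j Ij) => _ [t1 [t2 [h1 [h2 ht]]]].
rewrite (ht (fun u v => pair u x * pair v y)).
  rewrite big_cat /= !big1_seq ?addr0 //.
    by move=> p /andP [_ /h2 hp2]; rewrite (Sy _ hp2) mulr0.
  by move=> p /andP [_ /h1 hp1]; rewrite (Sx _ hp1) mul0r.
split=> *; rewrite ?pl ?pr; ring.
Qed.

Lemma triple x j y h : pair (x * (j * y)) h =
  \sum_(p <- Delta2 DH h) pair x p.1.1 * pair j p.1.2 * pair y p.2.
Proof.
case: hp => [_ [pm [p1 [pc pe]]]].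
rewrite -pc /Delta2 big_allpairs_dep /=.
apply: eq_bigr => p _; rewrite -pc big_distrr /=.
by apply: eq_bigr => q _; rewrite mulrA.
Qed.

End P.

Theorem lemma2p1 (k : fieldType) (B H : algType k)
  (DB : B -> tensor2 B B) (eB : B -> k) (DH : H -> tensor2 H H) (eH : H -> k)
  (pair : B -> H -> k) :
  is_bialgebra DB eB -> is_bialgebra DH eH ->
  is_hopf_pairing DB eB DH eH pair ->
  (* (i) *)
  (forall (I : B -> Prop) (KH : H -> Prop),
     is_coideal DB eB I -> algebra_generators KH ->
     (forall i h, I i -> KH h -> pair i h = 0) ->
     forall i h, I i -> pair i h = 0) /\
  (* (ii) *)
  (forall (I KI : B -> Prop) (KH : H -> Prop),
     is_biideal DB eB I -> ideal_generators KI I -> algebra_generators KH ->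
     (forall i h, KI i -> KH h -> pair i h = 0) ->
     (forall h, KH h -> in_H_span_H (fun x => KH x \/ x = 1) (Delta2 DH h)) ->
     forall i h, I i -> pair i h = 0).
Proof.
move=> _ _ hp; split; first exact: (part1 hp).
move=> I KI KH [[[I0 Isub] Iid] [_ hI]] [KII gI] gen hK hspan i h Ii.
have hp' := hp; case: hp' => [_ [pm [p1 [pc pe]]]].
apply: (part1 hp (KH := KH) (conj (conj I0 Isub) hI)) => // {}i {}h {}Ii Kh.
pose J := fun b => I b /\ forall h, (KH h \/ h = 1) -> pair b h = 0.
have key : forall x j y, J j -> J (x * (j * y)).
  move=> x j y [Ij Jj]; have Ixjy : I (x * (j * y)).
    by case: (Iid x (j * y) (proj2 (Iid y j Ij))).
  split=> // h' [Kh'|->]; last by rewrite p1; case: (hI _ Ixjy).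
  case: (hspan h' Kh') => t' [ht' te].
  rewrite (triple hp) (te (fun a b c => pair x a * pair j b * pair y c)).
    have hz : forall s, (KH s \/ s = 1) -> pair j s = 0.
      move=> s [Ks|->]; [by apply: Jj; left | by rewrite p1; case: (hI _ Ij)].
    rewrite big1_seq // => p /andP [_ /ht' hs].
    by rewrite (span0 (fun a u v => pr hp a j u v) hz hs) mulr0 mul0r.
  split; [|split] => *; rewrite ?(pl hp) ?(pr hp); ring.
have: J i.
  apply: (gI J) => //.
    split; [split|].
      split=> //; first by move=> h' _; apply: (lin0 (fun a u v => pl hp a u v h')).
    move=> a x y [Ix Jx] [Iy Jy]; split; first exact: Isub.
    by move=> h' H'; rewrite (pl hp) Jx ?Jy ?mulr0 ?add0r.
    move=> x j Jj; split.
      by rewrite -[j]mulr1; apply: key.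
    by rewrite -[j * x]mul1r; apply: key.
  move=> x Kx; split; first exact: KII.
  move=> h' [Kh'|->]; first exact: hK.
  by rewrite p1; case: (hI _ (KII _ Kx)).
by case=> _; apply; left.
Qed.
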